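(* Let $\mathcal M$ be a Polish metric structure and $\mathcal N$ a good countable approximating substructure of $\mathcal M$. Then for every $n$ and every co-meagre $A\subseteq\mathrm{Aut}(\mathcal N)^n$, the $\partial$-closure $\overline{A}^\partial$ computed in $\mathrm{Aut}(\mathcal M)^n$ is co-meagre in $\mathrm{Aut}(\mathcal M)^n$. In particular, if $\mathrm{Aut}(\mathcal N)$ has ample generics then the topometric group $(\mathrm{Aut}(\mathcal M),\tau,\partial)$ has ample generics.
   Context: A metric structure $\mathcal M$ is a complete bounded metric space $(M,d)$ with a family of uniformly continuous bounded predicates $P_i\colon M^{k_i}\to\mathbb R$ (including $d$) and uniformly continuous functions $f_j\colon M^{\ell_j}\to M$; it is Polish if $M$ is separable. $\mathrm{Aut}(\mathcal M)$ is the group of bijections preserving all predicates and functions, with $\tau$ the topology of pointwise convergence and $\partial(g,h)=\sup_{x\in M}d(gx,hx)$ the metric of uniform convergence; on $\mathrm{Aut}(\mathcal M)^n$ use the product topology and supremum metric. For $B$ in a metric space, $(B)_\varepsilon=\{y\colon\partial(y,B)<\varepsilon\}$. A countable (classical) structure $\mathcal N$ is a countable approximating substructure of $\mathcal M$ if its universe $N$ is a countable dense subset of $(M,d)$, every automorphism of $\mathcal N$ extends (uniquely) to an automorphism of $\mathcal M$, and $\mathrm{Aut}(\mathcal N)$ is dense in $\mathrm{Aut}(\mathcal M)$; $\mathrm{Aut}(\mathcal N)$ carries the topology of pointwise convergence on the discrete set $N$. It is good if moreover for every open $U\subseteq\mathrm{Aut}(\mathcal N)$ (in the topology of $\mathrm{Aut}(\mathcal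 N)$) and $\varepsilon>0$, the set $(U)_\varepsilon$ computed in $(\mathrm{Aut}(\mathcal M),\partial)$ is $\tau$-open. A Polish group $K$ has ample generics if for every $n$ there is $\bar g\in K^n$ whose diagonal conjugacy class $\{(kg_0k^{-1},\dots,kg_{n-1}k^{-1})\colon k\in K\}$ is co-meagre in $K^n$. A topometric group $(G,\tau,\partial)$ has ample generics if for every $n$ and $\varepsilon>0$ there is $\bar g\in G^n$ whose diagonal conjugacy class $C$ satisfies that $(C)_\varepsilon$ is co-meagre in $(G^n,\tau)$. *)

(* Defs.v *)
From Stdlib Require List.
From mathcomp Require Import all_boot all_order all_algebra.
From mathcomp Require Import boolp classical_sets cardinality reals.
Set Implicit Arguments. Unset Strict Implicit. Unset Printing Implicit Defensive.
Import Order.TTheory GRing.Theory Num.Theory.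
Local Open Scope ring_scope.
Local Open Scope classical_set_scope.

Record mstruct (R : realType) := MStruct {
  mcar : Type;
  mdist : mcar -> mcar -> R;
  pidx : Type;
  par : pidx -> nat;
  mpred : forall i : pidx, (par i).-tuple mcar -> R;
  fidx : Type;
  far : fidx -> nat;
  mfun : forall j : fidx, (far j).-tuple mcar -> mcar }.

Section MetricStructure.
Variables (R : realType) (M : mstruct R).
Local Notation d := (@mdist R M).

Definition is_metric :=
  (forall x y, 0 <= d x y) /\ (forall x y, d x y = 0 <-> x = y) /\
  (forall x y, d x y = d y x) /\ (forall x y z, d x z <= d x y + d y z).

Definition complete_metric := forall u : nat -> mcar M,
  (forall e, 0 < e -> exists N, forall m n, (N <= m)%N -> (N <= n)%N -> d (u m) (u n) < e) ->
  exists l, forall e, 0 < e -> exists N, forall n, (N <= n)%N -> d (u n) l < e.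

Definition bounded_metric := exists B : R, forall x y, d x y <= B.

Definition unif_cont_pred k (P : k.-tuple (mcar M) -> R) :=
  forall e, 0 < e -> exists2 delta, 0 < delta & forall xs ys : k.-tuple (mcar M),
    (forall i, d (tnth xs i) (tnth ys i) < delta) -> `|P xs - P ys| < e.
Definition bounded_pred k (P : k.-tuple (mcar M) -> R) :=
  exists B : R, forall xs, `|P xs| <= B.
Definition unif_cont_fun k (f : k.-tuple (mcar M) -> mcar M) :=
  forall e, 0 < e -> exists2 delta, 0 < delta & forall xs ys : k.-tuple (mcar M),
    (forall i, d (tnth xs i) (tnth ys i) < delta) -> d (f xs) (f ys) < e.

Definition is_metric_structure :=
  [/\ is_metric, complete_metric, bounded_metric,
      (forall i, unif_cont_pred (@mpred R M i) /\ bounded_pred (@mpred R M i)) &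
      (forall j, unif_cont_fun (@mfun R M j))].

Definition separable := exists D : set (mcar M), countable D /\
  forall x e, 0 < e -> exists2 y, D y & d x y < e.

Definition polish_metric_structure := is_metric_structure /\ separable.

Definition autM (g : mcar M -> mcar M) :=
  [/\ bijective g, (forall x y, d (g x) (g y) = d x y),
      (forall i (xs : (par i).-tuple (mcar M)), mpred (map_tuple g xs) = mpred xs) &
      (forall j (xs : (far j).-tuple (mcar M)), g (mfun xs) = mfun (map_tuple g xs))].

Definition udist (g h : mcar M -> mcar M) : R := sup (range (fun x => d (g x) (h x))).

Definition AutMn (n : nat) : set ('I_n -> mcar M -> mcar M) :=
  [set gs | forall i, autM (gs i)].

(* tau-open subsets of Aut(M)^n (product of pointwise convergence topologies,
   relative to Aut(M)^n) *)
Definition tau_open (n : nat) (U : set ('I_n -> mcar M -> mcar M)) :=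
  U `<=` @AutMn n /\
  forall gs, U gs -> exists (F : seq (mcar M)) (e : R), 0 < e /\
    forall hs, @AutMn n hs ->
      (forall i x, Stdlib.Lists.List.In x F -> d (gs i x) (hs i x) < e) -> U hs.

Definition udistn_lt (n : nat) (gs hs : 'I_n -> mcar M -> mcar M) (e : R) :=
  forall i, udist (gs i) (hs i) < e.

Definition eps_nbhd (n : nat) (B : set ('I_n -> mcar M -> mcar M)) (e : R) :=
  [set gs | @AutMn n gs /\ exists2 hs, B hs & udistn_lt gs hs e].

Definition dclosure (n : nat) (B : set ('I_n -> mcar M -> mcar M)) :=
  [set gs | @AutMn n gs /\ forall e, 0 < e -> exists2 hs, B hs & udistn_lt gs hs e].

End MetricStructure.

Section Category.
Variables (T : Type) (X : set T) (op : set T -> Prop).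

Definition nowhere_dense (A : set T) :=
  forall U, op U -> U !=set0 ->
    exists V, [/\ op V, V !=set0, V `<=` U & V `&` A = set0].

Definition meagre (A : set T) :=
  exists An : nat -> set T, (forall k, nowhere_dense (An k)) /\ A `<=` \bigcup_k An k.

Definition comeagre (A : set T) := meagre (X `\` A).
End Category.

Record cstruct := CStruct {
  ncar : Type;
  ridx : Type;
  rar : ridx -> nat;
  nrel : forall j : ridx, (rar j).-tuple ncar -> Prop;
  gidx : Type;
  gar : gidx -> nat;
  nfun : forall j : gidx, (gar j).-tuple ncar -> ncar }.

Section Classical.
Variable N : cstruct.

Definition autN (s : ncar N -> ncar N) :=
  [/\ bijective s,
      (forall j (xs : (rar j).-tuple (ncar N)), nrel (map_tuple s xs) <-> nrel xs) &
      (forall j (xs : (gar j).-tuple (ncar N)), s (nfun xs) = nfun (map_tuple s xs))].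

Definition AutNn (n : nat) : set ('I_n -> ncar N -> ncar N) :=
  [set ss | forall i, autN (ss i)].

(* open subsets of Aut(N)^n: pointwise convergence on the discrete set N *)
Definition N_open (n : nat) (U : set ('I_n -> ncar N -> ncar N)) :=
  U `<=` @AutNn n /\
  forall ss, U ss -> exists F : seq (ncar N),
    forall ts, @AutNn n ts -> (forall i x, Stdlib.Lists.List.In x F -> ts i x = ss i x) -> U ts.
End Classical.

Section Approx.
Variables (R : realType) (M : mstruct R) (N : cstruct) (iota : ncar N -> mcar M).

(* g : M -> M extends s : N -> N (N identified with its image under iota) *)
Definition extends (g : mcar M -> mcar M) (s : ncar N -> ncar N) :=
  forall x, g (iota x) = iota (s x).

Definition extn (n : nat) (A : set ('I_n -> ncar N -> ncar N)) :=
  [set gs | @AutMn R M n gs /\ exists2 ss, A ss & forall i, extends (gs i) (ss i)].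

(* N is a countable approximating substructure of M (universe of N is the
   countable dense subset iota(N) of M) *)
Definition approximating :=
  [/\ injective iota, countable [set: ncar N],
      (forall x e, 0 < e -> exists y, mdist x (iota y) < e),
      (forall s, autN s -> exists g, autM g /\ extends g s) &
      (* Aut(N) is dense in Aut(M) (for tau) *)
      (forall U, tau_open U -> U !=set0 -> (U `&` @extn 1 (@AutNn N 1)) !=set0)].

Definition good_approximating :=
  approximating /\
  forall (U : set ('I_1 -> ncar N -> ncar N)) (e : R),
    N_open U -> 0 < e -> tau_open (eps_nbhd (@extn 1 U) e).
End Approx.

Definition conjclassN (N : cstruct) (n : nat) (ss : 'I_n -> ncar N -> ncar N) :=
  [set ts | @AutNn N n ts /\ exists2 k, autN k & forall i, ts i \o k = k \o ss i].

Definition ample_generics_N (N : cstruct) :=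
  forall n, exists2 ss, @AutNn N n ss &
    comeagre (@AutNn N n) (@N_open N n) (conjclassN ss).

Definition conjclassM (R : realType) (M : mstruct R) (n : nat)
    (gs : 'I_n -> mcar M -> mcar M) :=
  [set hs | @AutMn R M n hs /\ exists2 k, autM k & forall i, hs i \o k = k \o gs i].

Definition ample_generics_topometric (R : realType) (M : mstruct R) :=
  forall n (e : R), 0 < e -> exists2 gs, @AutMn R M n gs &
    comeagre (@AutMn R M n) (@tau_open R M n) (eps_nbhd (conjclassM gs) e).

(* Main.v *)
Require Import Defs.
From mathcomp Require Import all_boot all_order all_algebra.
From mathcomp Require Import boolp classical_sets cardinality reals.
From mathcomp Require Import lra.
Set Implicit Arguments. Unset Strict Implicit. Unset Printing Implicit Defensive.
Import Order.TTheory GRing.Theory Num.Theory.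
Local Open Scope ring_scope.
Local Open Scope classical_set_scope.

Lemma In_mem (T : eqType) (x : T) (s : seq T) : x \in s -> List.In x s.
Proof. elim: s => //= a s IH; rewrite inE => /orP[/eqP->|/IH]; by [left|right]. Qed.

Lemma map_ext_In (A B : Type) (f g : A -> B) (l : seq A) :
  (forall x, List.In x l -> f x = g x) -> map f l = map g l.
Proof. elim: l => //= a l IH H; rewrite H ?IH //; [move=> x Hx; apply: H; by right|by left]. Qed.

Section Pre.
Variables (R : realType).

Lemma list_min (T : Type) (F : seq T) (E : T -> R) :
  (forall x, List.In x F -> 0 < E x) -> exists2 e, 0 < e & forall x, List.In x F -> e <= E x.
Proof.
elim: F => [|a F IH] H; first by exists 1.
have [e e0 He] : exists2 e, 0 < e & forall x, List.In x F -> e <= E x.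
  by apply: IH => x Hx; apply: H; right.
have Ea : 0 < E a by apply: H; left.
exists (Num.min e (E a)); first by rewrite lt_min e0 Ea.
move=> x [<-|Hx]; first by rewrite ge_min lexx orbT.
by rewrite ge_min He.
Qed.

Lemma fin_min (I : finType) (E : I -> R) :
  (forall i, 0 < E i) -> exists2 e, 0 < e & forall i, e <= E i.
Proof.
move=> H; have [e e0 He] := @list_min _ (enum I) E (fun x _ => H x).
by exists e => // i; apply: He; apply: In_mem; rewrite mem_enum.
Qed.

Lemma le_of_lt_add (a e : R) : (forall eta, 0 < eta -> a < e + eta) -> a <= e.
Proof. move=> H; apply/ler_addgt0Pr => eta /H /ltW //. Qed.
End Pre.

Section Metric.
Variables (R : realType) (M : mstruct R).
Local Notation d := (@mdist R M).
Hypothesis Hm : is_metric M.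
Hypothesis Hb : bounded_metric M.

Lemma d_ge0 x y : 0 <= d x y. Proof. by case: Hm. Qed.
Lemma d_sym x y : d x y = d y x. Proof. by case: Hm => _ [_ []]. Qed.
Lemma d_tri x y z : d x z <= d x y + d y z. Proof. by case: Hm => _ [_ [_]]. Qed.
Lemma d_eq0 x y : d x y = 0 <-> x = y. Proof. by case: Hm => _ []. Qed.
Lemma d_xx x : d x x = 0. Proof. by apply/d_eq0. Qed.

Lemma udist_ge (g h : mcar M -> mcar M) x : d (g x) (h x) <= udist g h.
Proof.
have [B HB] := Hb.
apply: sup_upper_bound; last by exists x.
split; first by exists (d (g x) (h x)), x.
by exists B => z [y _ Hz]; rewrite -Hz.
Qed.

Lemma udist_le (g h : mcar M -> mcar M) c : 0 <= c -> (forall x, d (g x) (h x) <= c) -> udist g h <= c.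
Proof.
move=> c0 H; rewrite /udist.
have [[x _]|ne] := pselect (exists x : mcar M, True).
  apply: ge_sup; first by exists (d (g x) (h x)), x.
  by move=> z [y _ Hz]; rewrite -Hz.
suff -> : range (fun x => d (g x) (h x)) = set0 by rewrite sup0.
apply/seteqP; split => // z [y _ _]; by exfalso; apply: ne; exists y.
Qed.

Lemma udist_refl_lt (g : mcar M -> mcar M) e : 0 < e -> udist g g < e.
Proof. move=> e0; apply: (le_lt_trans _ e0); apply: udist_le => // x; by rewrite d_xx. Qed.

Lemma map_tupleK k (g g' : mcar M -> mcar M) (xs : k.-tuple (mcar M)) :
  cancel g' g -> map_tuple g (map_tuple g' xs) = xs.
Proof. move=> c; apply: val_inj => /=; rewrite -map_comp (eq_map (g := id)) ?map_id //. Qed.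

Lemma map_tuple_comp k (g g' : mcar M -> mcar M) (xs : k.-tuple (mcar M)) :
  map_tuple (g \o g') xs = map_tuple g (map_tuple g' xs).
Proof. by apply: val_inj => /=; rewrite map_comp. Qed.

Lemma autM_comp (g h : mcar M -> mcar M) : autM g -> autM h -> autM (g \o h).
Proof.
move=> [bg dg pg fg] [bh dh ph fh]; split.
- exact: bij_comp.
- by move=> x y /=; rewrite dg dh.
- by move=> i xs; rewrite map_tuple_comp pg ph.
- by move=> j xs /=; rewrite fh fg map_tuple_comp.
Qed.

Lemma autM_inv (g : mcar M -> mcar M) : autM g -> exists g', [/\ autM g', cancel g g' & cancel g' g].
Proof.
move=> [[g' c1 c2] dg pg fg]; exists g'; split => //; split.
- by exists g.
- by move=> x y; rewrite -dg !c2.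
- by move=> i xs; rewrite -pg map_tupleK.
- by move=> j xs; apply: (can_inj c1); rewrite c2 fg map_tupleK.
Qed.

Lemma iso_dense_eq (D : set (mcar M)) (p q : mcar M -> mcar M) :
  (forall x e, 0 < e -> exists2 y, D y & d x y < e) ->
  (forall x y, d (p x) (p y) = d x y) -> (forall x y, d (q x) (q y) = d x y) ->
  (forall y, D y -> p y = q y) -> p = q.
Proof.
move=> HD dp dq E; apply: funext => z; apply/d_eq0.
apply/eqP; rewrite eq_le d_ge0 andbT; apply: le_of_lt_add => eta eta0.
have [y Dy Hy] := HD z (eta / 2) ltac:(lra).
have h1 := d_tri (p z) (p y) (q z); have h2 := d_tri (p y) (q y) (q z).
have h3 : d (p y) (q y) = 0 by rewrite E // d_xx.
have h4 := dq y z; have h5 := dp z y; have h6 := d_sym y z; lra.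
Qed.
End Metric.

Section Main.
Variables (R : realType) (M : mstruct R) (N : cstruct) (iota : ncar N -> mcar M).
Local Notation d := (@mdist R M).
Hypothesis Hm : is_metric M.
Hypothesis Hb : bounded_metric M.
Hypothesis Hden : forall x e, 0 < e -> exists y, d x (iota y) < e.
Hypothesis Hext : forall s, autN s -> exists g, autM g /\ extends iota g s.
Hypothesis Hdense : forall U, tau_open U -> U !=set0 -> (U `&` @extn R M N iota 1 (@AutNn N 1)) !=set0.
Hypothesis Hgood : forall (U : set ('I_1 -> ncar N -> ncar N)) (e : R),
    N_open U -> 0 < e -> tau_open (eps_nbhd (extn iota U) e).

Local Notation XM n := (@AutMn R M n).
Local Notation XN n := (@AutNn N n).
Local Notation Ext V := (@extn R M N iota _ V).
Local Notation nbd V e := (eps_nbhd (Ext V) e).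

Lemma tau_openI n (U V : set ('I_n -> mcar M -> mcar M)) :
  tau_open U -> tau_open V -> tau_open (U `&` V).
Proof.
move=> [sU oU] [sV oV]; split; first by move=> g [/sU].
move=> gs [/oU [F1 [e1 [e10 H1]]] /oV [F2 [e2 [e20 H2]]]].
exists (F1 ++ F2), (Num.min e1 e2); split; first by rewrite lt_min e10 e20.
move=> hs Xhs Hhs; split.
- apply: H1 => // i x Hx; apply: (lt_le_trans (Hhs i x _)); first by apply: List.in_or_app; left.
  by rewrite ge_min lexx.
- apply: H2 => // i x Hx; apply: (lt_le_trans (Hhs i x _)); first by apply: List.in_or_app; right.
  by rewrite ge_min lexx orbT.
Qed.

Lemma N_openI n (U V : set ('I_n -> ncar N -> ncar N)) :
  N_open U -> N_open V -> N_open (U `&` V).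
Proof.
move=> [sU oU] [sV oV]; split; first by move=> g [/sU].
move=> ss [/oU [F1 H1] /oV [F2 H2]]; exists (F1 ++ F2) => ts Xts Hts; split.
- by apply: H1 => // i x Hx; apply: Hts; apply: List.in_or_app; left.
- by apply: H2 => // i x Hx; apply: Hts; apply: List.in_or_app; right.
Qed.

Lemma ext_exists n (ts : 'I_n -> ncar N -> ncar N) : XN n ts ->
  exists gs, XM n gs /\ forall i, extends iota (gs i) (ts i).
Proof.
move=> Xts; have [gs Hgs] := choice (fun i => Hext (Xts i)).
by exists gs; split => i; case: (Hgs i).
Qed.

Lemma nbd_sub n (V : set ('I_n -> ncar N -> ncar N)) e : nbd V e `<=` XM n.
Proof. by move=> g []. Qed.

Lemma nbd_mono n (V V' : set ('I_n -> ncar N -> ncar N)) e :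
  V `<=` V' -> nbd V e `<=` nbd V' e.
Proof. by move=> VV' g [Xg [hs [Xhs [ss /VV' Vss Hss]] Hl]]; split => //; exists hs => //; split => //; exists ss. Qed.

Lemma good_n n (V : set ('I_n -> ncar N -> ncar N)) e :
  N_open V -> 0 < e -> tau_open (nbd V e).
Proof.
move=> [sV oV] e0; split; first exact: nbd_sub.
move=> gs [Xgs [hs [Xhs [ss Vss Ess]] Hl]].
have [F HF] := oV _ Vss.
pose U1 (i : 'I_n) := [set t : 'I_1 -> ncar N -> ncar N | XN 1 t /\
   forall x, List.In x F -> t ord0 x = ss i x].
have U1o i : N_open (U1 i).
  split; first by move=> t [].
  move=> t [Xt Ht]; exists F => t' Xt' Et'; split => // x Hx.
  by rewrite Et' // Ht.
have Hi i : exists FE : seq (mcar M) * R, 0 < FE.2 /\ forall hs1, XM 1 hs1 ->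
    (forall j x, List.In x FE.1 -> d (gs i x) (hs1 j x) < FE.2) -> nbd (U1 i) e hs1.
  have [_ o] := Hgood (U1o i) e0.
  have Hm1 : nbd (U1 i) e (fun _ => gs i).
    split; first by move=> j; apply: Xgs.
    exists (fun _ => hs i); last by move=> j.
    split; first by move=> j; apply: Xhs.
    exists (fun _ => ss i) => //; split => // j; exact: (sV _ Vss).
  have [F' [e' [e'0 H']]] := o _ Hm1.
  by exists (F', e').
have [FE HFE] := choice Hi.
have [e' e'0 He'] := fin_min (fun i => (HFE i).1).
exists (List.flat_map (fun i => (FE i).1) (enum 'I_n)), e'; split => //.
move=> gs' Xgs' Hgs'; split => //.
have Hj i : exists p : ('I_1 -> mcar M -> mcar M) * ('I_1 -> ncar N -> ncar N),
    [/\ XM 1 p.1, U1 i p.2, (forall j, extends iota (p.1 j) (p.2 j)) & udist (gs' i) (p.1 ord0) < e].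
  have Hin x : List.In x (FE i).1 -> List.In x (List.flat_map (fun i => (FE i).1) (enum 'I_n)).
    move=> Hx; apply/List.in_flat_map; exists i; split => //; apply: In_mem; by rewrite mem_enum.
  have [_ [h1 [Xh1 [t1 U1t1 Et1]] Hh1]] := (HFE i).2 (fun _ => gs' i) (fun j => Xgs' i) (fun j x Hx =>
     lt_le_trans (Hgs' i x (Hin x Hx)) (He' i)).
  by exists (h1, t1); split.
have [p Hp] := choice Hj.
exists (fun i => (p i).1 ord0).
  split; first by move=> i; case: (Hp i) => Xi _ _ _; apply: Xi.
  exists (fun i => (p i).2 ord0); last by move=> i; case: (Hp i) => _ _ Ei _; apply: Ei.
  apply: HF.
    by move=> i; case: (Hp i) => _ [Xt _] _ _; apply: Xt.
  by move=> i x Hx; case: (Hp i) => _ [_ Et] _ _; apply: Et.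
by move=> i; case: (Hp i).
Qed.

Lemma slack (g h : mcar M -> mcar M) (F : seq (mcar M)) e :
  (forall x, List.In x F -> d (g x) (h x) < e) ->
  exists2 e', 0 < e' & forall h', (forall x, List.In x F -> d (h x) (h' x) < e') ->
    forall x, List.In x F -> d (g x) (h' x) < e.
Proof.
move=> H; have [e' e'0 He'] := @list_min R _ F (fun x => e - d (g x) (h x))
  (fun x Hx => ltac:(have := H x Hx; lra)).
exists e' => // h' Hh' x Hx; have := He' x Hx; have := Hh' x Hx.
have := d_tri Hm (g x) (h x) (h' x); lra.
Qed.

Lemma dense_n n (U : set ('I_n -> mcar M -> mcar M)) :
  tau_open U -> U !=set0 -> (U `&` Ext (XN n)) !=set0.
Proof.
move=> [sU oU] [gs Ugs]; have Xgs := sU _ Ugs.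
have [F [e [e0 HU]]] := oU _ Ugs.
pose U1 (i : 'I_n) := [set h : 'I_1 -> mcar M -> mcar M | XM 1 h /\
   forall x, List.In x F -> d (gs i x) (h ord0 x) < e].
have U1o i : tau_open (U1 i).
  split; first by move=> h [].
  move=> h [Xh Hh]; have [e' e'0 He'] := slack Hh.
  exists F, e'; split => // h' Xh' Hh'; split => //; apply: He' => x Hx; exact: Hh'.
have Hi i : exists p : ('I_1 -> mcar M -> mcar M) * ('I_1 -> ncar N -> ncar N),
   [/\ XM 1 p.1, (forall x, List.In x F -> d (gs i x) (p.1 ord0 x) < e),
       XN 1 p.2 & forall j, extends iota (p.1 j) (p.2 j)].
  have [|h [[Xh Hh] [_ [t Xt Et]]]] := Hdense (U1o i).
    by exists (fun _ => gs i); split; [move=> j; apply: Xgs|move=> x _; rewrite (d_xx Hm)].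
  by exists (h, t); split.
have [p Hp] := choice Hi.
exists (fun i => (p i).1 ord0); split.
  apply: HU; first by move=> i; case: (Hp i) => Xi _ _ _; apply: Xi.
  by move=> i x Hx; case: (Hp i) => _ H _ _; apply: H.
split; first by move=> i; case: (Hp i) => Xi _ _ _; apply: Xi.
exists (fun i => (p i).2 ord0); first by move=> i; case: (Hp i) => _ _ Xt _; apply: Xt.
by move=> i; case: (Hp i) => _ _ _ E; apply: E.
Qed.


Lemma disj0 (T : Type) (A B : set T) : (forall x, A x -> B x -> False) -> A `&` B = set0.
Proof. move=> H; apply/seteqP; split => x //; by move=> [/H Hx /Hx]. Qed.

Lemma autM_iso (g : mcar M -> mcar M) : autM g -> forall x y, d (g x) (g y) = d x y.
Proof. by case. Qed.

Lemma nd_S n (V W : set ('I_n -> ncar N -> ncar N)) e :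
  N_open V -> N_open W -> (forall U, N_open U -> U !=set0 -> (U `&` W) !=set0) -> 0 < e ->
  nowhere_dense (@tau_open R M n) (nbd V e `\` nbd (V `&` W) e).
Proof.
move=> oV oW dW e0 U oU neU.
have [[h [Uh [Xh [hs [Xhs [ss Vss Ess]] Hl]]]]|no] := pselect (exists h, U h /\ nbd V e h); last first.
  exists U; split => //; apply: disj0 => g Ug [Sg _]; apply: no; by exists g.
have [F [del [del0 HU]]] := oU.2 h Uh.
have [gi Hgi] := choice (fun i => autM_inv (Xhs i)).
have Hy (p : 'I_n * mcar M) : exists y, d (gi p.1 (h p.1 p.2)) (iota y) < del / 2.
  by apply: Hden; lra.
have [yf Hyf] := choice Hy.
pose C := [set t : 'I_n -> ncar N -> ncar N | XN n t /\
   forall i x, List.In x F -> t i (yf (i, x)) = ss i (yf (i, x))].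
have oC : N_open C.
  split; first by move=> t [].
  move=> t [Xt Ht]; exists (List.flat_map (fun i => List.map (fun x => yf (i, x)) F) (enum 'I_n)).
  move=> t' Xt' Et'; split => // i x Hx; rewrite Et' ?Ht //.
  apply/List.in_flat_map; exists i; split; first by apply: In_mem; rewrite mem_enum.
  by apply: List.in_map.
have [|t [[Ct Vt] Wt]] := dW (C `&` V) (N_openI oC oV).
  by exists ss; split => //; split => //; exact: oV.1 _ Vss.
have [gt [Xgt Egt]] := ext_exists Ct.1.
pose h' := fun i => gt i \o gi i \o h i.
have Xh' : XM n h'.
  move=> i; apply: autM_comp; last exact: Xh.
  apply: autM_comp; first exact: Xgt.
  by case: (Hgi i).
have Uh' : U h'.
  apply: HU => // i x Hx.
  case: (Hgi i) => _ c1 c2.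
  set z := gi i (h i x); set y := yf (i, x).
  have Hz : d z (iota y) < del / 2 by apply: (Hyf (i, x)).
  have -> : h i x = hs i z by rewrite /z c2.
  rewrite /h' /= -/z.
  have E : hs i (iota y) = gt i (iota y) by rewrite Ess Egt Ct.2.
  have t1 := d_tri Hm (hs i z) (hs i (iota y)) (gt i z).
  have t2 := d_tri Hm (hs i (iota y)) (gt i (iota y)) (gt i z).
  have t3 : d (hs i (iota y)) (gt i (iota y)) = 0 by rewrite E (d_xx Hm).
  have t4 := autM_iso (Xhs i) z (iota y).
  have t5 := autM_iso (Xgt i) (iota y) z.
  have t6 := d_sym Hm (iota y) z.
  lra.
have Nh' : nbd (V `&` W) e h'.
  split => //; exists gt.
    by split => //; exists t.
  move=> i; case: (Hgi i) => _ c1 c2.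
  suff -> : udist (h' i) (gt i) = udist (h i) (hs i) by apply: Hl.
  rewrite /udist; do 2 apply: f_equal; apply: funext => x.
  by rewrite /h' /= (autM_iso (Xgt i)) -(autM_iso (Xhs i)) c2.
exists (U `&` nbd (V `&` W) e); split.
- by apply: tau_openI => //; apply: good_n => //; apply: N_openI.
- by exists h'.
- by move=> g [].
- by apply: disj0 => g [_ H1] [_ H2].
Qed.

Lemma nd_D n e : 0 < e -> nowhere_dense (@tau_open R M n) (XM n `\` nbd (XN n) e).
Proof.
move=> e0 U oU neU.
have [h [Uh [Xh [ss Xss Ess]]]] := dense_n oU neU.
have oX : N_open (XN n) by split => // s0 Xs0; exists [::].
exists (U `&` nbd (XN n) e); split.
- by apply: tau_openI => //; apply: good_n.
- exists h; split => //; split => //; exists h; first by split => //; exists ss.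
  by move=> i; apply: udist_refl_lt.
- by move=> g [].
- by apply: disj0 => g [_ H1] [_ H2].
Qed.

Lemma nd_0 n : nowhere_dense (@tau_open R M n) set0.
Proof. move=> U oU neU; exists U; split => //; by apply: disj0. Qed.

Variables (f : ncar N -> nat) (Hf : injective f).

Definition B n (L : seq (nat * nat * nat)) : set ('I_n -> ncar N -> ncar N) :=
  [set t | XN n t /\ forall (i : 'I_n) x y, List.In (nat_of_ord i, f x, f y) L -> t i x = y].
Arguments B : clear implicits.

Definition en (a : nat) : option (ncar N) :=
  match pselect (exists x, f x = a) with
  | left H => Some (proj1_sig (cid H)) | right _ => None end.

Lemma en_f x : en (f x) = Some x.
Proof.
rewrite /en; case: pselect => [H|H]; last by exfalso; apply: H; exists x.
by congr Some; apply: Hf; case: (cid H).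
Qed.

Lemma B_open n L : N_open (B n L).
Proof.
split; first by move=> t [].
move=> t [Xt Ht].
exists (List.flat_map (fun p : nat * nat * nat => match en p.1.2 with Some x => [:: x] | None => [::] end) L).
move=> t' Xt' Et'; split => // i x y Hin; rewrite Et'; first exact: Ht.
apply/List.in_flat_map; exists (nat_of_ord i, f x, f y); split => //=.
by rewrite en_f; left.
Qed.

Definition cons_with n (s : 'I_n -> ncar N -> ncar N) (L : seq (nat * nat * nat)) :=
  forall (i : 'I_n) x y, List.In (nat_of_ord i, f x, f y) L -> s i x = y.

Lemma B_app n L Lc s : B n L s -> cons_with s Lc -> B n (L ++ Lc) s.
Proof.
move=> [Xs Hs] Hc; split => // i x y Hin.
by case: (List.in_app_or _ _ _ Hin) => H; [apply: Hs|apply: Hc].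
Qed.

Lemma B_sub n L L' : (forall p, List.In p L -> List.In p L') -> B n L' `<=` B n L.
Proof. move=> H t [Xt Ht]; split => // i x y Hin; apply: Ht; exact: H. Qed.

Lemma chain n (W : nat -> set ('I_n -> ncar N -> ncar N)) g e :
  (forall k, N_open (W k)) -> 0 < e -> nbd (XN n) e g ->
  (forall L k, nbd (B n L) e g -> nbd (B n L `&` W k) e g) ->
  exists s hs, [/\ XN n s, (forall k, W k s), XM n hs,
     (forall i, extends iota (hs i) (s i)) & forall i, udist (g i) (hs i) <= e].
Proof.
move=> oW e0 [Xg [hs0 [Xhs0 [s0 Xs0 Es0]] Hl0]] P1.
pose St := (seq (nat * nat * nat) * ('I_n -> ncar N -> ncar N) * ('I_n -> mcar M -> mcar M))%type.
pose Inv (st : St) := [/\ B n st.1.1 st.1.2, XM n st.2,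
   (forall i, extends iota (st.2 i) (st.1.2 i)) & udistn_lt g st.2 e].
pose Exh k (L : seq (nat * nat * nat)) := forall x, f x = k -> forall i : 'I_n,
   (exists y, List.In (nat_of_ord i, f x, f y) L) /\ (exists u, List.In (nat_of_ord i, f u, f x) L).
pose Step k (st st' : St) := [/\ Inv st', B n st'.1.1 `<=` B n st.1.1 `&` W k & Exh k st'.1.1].
have step k st : Inv st -> exists st', Step k st st'.
  case=> Bst Xst Est Hst.
  have [_ [hs' [Xhs' [s' [Bs' Ws'] Es']] Hl']] : nbd (B n st.1.1 `&` W k) e g.
    by apply: P1; split => //; exists st.2 => //; split => //; exists st.1.2.
  have [F HF] := (oW k).2 _ Ws'.
  have Xs' : XN n s' by case: Bs'.
  have Hinv i : exists g1, cancel (s' i) g1 /\ cancel g1 (s' i).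
    by case: (Xs' i) => -[g1 c1 c2] _ _; exists g1.
  have [sinv Hsinv] := choice Hinv.
  pose Lf := List.flat_map (fun i : 'I_n => List.map (fun x => (nat_of_ord i, f x, f (s' i x))) F) (enum 'I_n).
  have cLf : cons_with s' Lf.
    move=> i x y /List.in_flat_map [j [_ /List.in_map_iff [x' [E _]]]].
    case: E => /val_inj Eij /Hf Ex /Hf Ey; by rewrite -Ey Ex Eij.
  have inLf i x : List.In x F -> List.In (nat_of_ord i, f x, f (s' i x)) Lf.
    move=> Hx; apply/List.in_flat_map; exists i; split; first by apply: In_mem; rewrite mem_enum.
    by apply: List.in_map.
  have Bs'2 : B n (st.1.1 ++ Lf) s' by apply: B_app.
  have sub2 : B n (st.1.1 ++ Lf) `<=` B n st.1.1 `&` W k.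
    move=> t Bt; split; first by apply: (B_sub _ Bt) => p Hp; apply: List.in_or_app; left.
    apply: HF; first by case: Bt.
    move=> i x Hx; case: Bt => _ Ht; apply: Ht; apply: List.in_or_app; right; exact: inLf.
  have [[x0 Hx0]|nx] := pselect (exists x, f x = k); last first.
    exists (st.1.1 ++ Lf, s', hs'); split => //=.
    by move=> x Hx; exfalso; apply: nx; exists x.
  pose Lx := List.flat_map (fun i : 'I_n => [:: (nat_of_ord i, f x0, f (s' i x0)); (nat_of_ord i, f (sinv i x0), f x0)]) (enum 'I_n).
  have cLx : cons_with s' Lx.
    move=> i x y /List.in_flat_map [j [_ [E|[E|[]]]]]; case: E => /val_inj Eij /Hf Ex /Hf Ey.
      by rewrite -Ey Ex Eij.
    by rewrite -Ey -Ex Eij; case: (Hsinv i).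
  have inLx i : List.In (nat_of_ord i, f x0, f (s' i x0)) Lx /\ List.In (nat_of_ord i, f (sinv i x0), f x0) Lx.
    have Hi : List.In i (enum 'I_n) by apply: In_mem; rewrite mem_enum.
    by split; apply/List.in_flat_map; exists i; split => //; [left|right; left].
  exists ((st.1.1 ++ Lf) ++ Lx, s', hs'); split => //=.
  - split => //; exact: B_app.
  - move=> t Bt; apply: sub2; apply: (B_sub _ Bt) => p Hp; apply: List.in_or_app; by left.
  - move=> x Hx i; have -> : x = x0 by apply: Hf; rewrite Hx Hx0.
    case: (inLx i) => H1 H2; split.
      by exists (s' i x0); apply: List.in_or_app; right.
    by exists (sinv i x0); apply: List.in_or_app; right.
have Hch (p : nat * St) : exists st', Inv p.2 -> Step p.1 p.2 st'.
  have [H|H] := pselect (Inv p.2); last by exists p.2.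
  by have [st' Hst'] := step p.1 p.2 H; exists st'.
have [stepf Hstepf] := choice Hch.
pose sq := nat_rect (fun _ => St) ([::], s0, hs0) (fun k st => stepf (k, st)).
have sqS k : sq k.+1 = stepf (k, sq k) by [].
have Inv0 : Inv (sq 0) by split => //=; split.
have HI : forall k, Inv (sq k) /\ Step k (sq k) (sq k.+1).
  elim=> [|k [_ [IH _ _]]]; first by split => //; rewrite sqS; apply: (Hstepf (0, sq 0)).
  by split => //; rewrite sqS; apply: (Hstepf (k.+1, sq k.+1)).
pose Lk k := (sq k).1.1. pose sk k := (sq k).1.2. pose hk k := (sq k).2.
have sB k : B n (Lk k) (sk k) by case: (HI k) => [[]].
have Xsk k : XN n (sk k) by case: (sB k).
have nest j m : B n (Lk (j + m)%N) `<=` B n (Lk j).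
  elim: m => [|m IH]; first by rewrite addn0.
  move=> t Bt; apply: IH; rewrite addnS in Bt; case: (HI (j + m)%N) => _ [_ H _].
  by case: (H t Bt).
have nest' j j' : (j <= j')%N -> B n (Lk j') `<=` B n (Lk j).
  by move=> le; rewrite -(subnKC le); apply: nest.
have inW k : B n (Lk k.+1) `<=` W k by move=> t Bt; case: (HI k) => _ [_ H _]; case: (H t Bt).
have exh k : Exh k (Lk k.+1) by case: (HI k) => _ [].
pose s := fun i x => sk (f x).+1 i x.
have evt i x j : ((f x).+1 <= j)%N -> sk j i x = s i x.
  move=> le; have [[y Hy] _] := exh (f x) x erefl i.
  have [_ H1] := nest' _ _ le _ (sB j); have [_ H2] := sB (f x).+1.
  by rewrite /s (H1 _ _ _ Hy) (H2 _ _ _ Hy).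
have surj i x : exists u, s i u = x.
  have [_ [u Hu]] := exh (f x) x erefl i; exists u.
  pose J := maxn (f u).+1 (f x).+1.
  rewrite -(evt i u J) ?leq_maxl //.
  have [_ H1] := nest' _ J (leq_maxr _ _) _ (sB J).
  exact: H1 _ _ _ Hu.
have sinj i : injective (s i).
  move=> x1 x2 E; pose J := maxn (f x1).+1 (f x2).+1.
  have := Xsk J i => -[[g0 c1 c2] _ _]; apply: (can_inj c1).
  by rewrite (evt i x1 J) ?leq_maxl // (evt i x2 J) ?leq_maxr.
have evl i (l : seq (ncar N)) : exists J, forall j, (J <= j)%N -> forall x, List.In x l -> sk j i x = s i x.
  elim: l => [|a l [J HJ]]; first by exists 0%N.
  exists (maxn (f a).+1 J) => j le x [<-|Hx].
    by apply: evt; apply: leq_trans le; apply: leq_maxl.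
  by apply: HJ => //; apply: leq_trans le; apply: leq_maxr.
have Xs : XN n s.
  move=> i; split.
  - have [sv Hsv] := choice (surj i); exists sv => x; last exact: Hsv.
    by apply: sinj; apply: Hsv.
  - move=> j xs; have [J HJ] := evl i xs.
    have -> : map_tuple (s i) xs = map_tuple (sk J i) xs.
      by apply: val_inj => /=; apply: map_ext_In => x Hx; rewrite HJ.
    by case: (Xsk J i).
  - move=> j xs; have [J HJ] := evl i (nfun xs :: xs).
    have -> : map_tuple (s i) xs = map_tuple (sk J i) xs.
      by apply: val_inj => /=; apply: map_ext_In => x Hx; rewrite HJ //; right.
    rewrite -(HJ J) //; last by left.
    by case: (Xsk J i).
have sBm m : B n (Lk m) s.
  split => // i x y Hin; pose J := maxn m (f x).+1.
  rewrite -(evt i x J) ?leq_maxr //.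
  have [_ H1] := nest' _ J (leq_maxl _ _) _ (sB J).
  exact: H1.
have [hs [Xhs Ehs]] := ext_exists Xs.
exists s, hs; split => //.
  by move=> k; apply: inW; apply: sBm.
move=> i; apply: udist_le => //; first exact: ltW.
move=> x; apply: le_of_lt_add => eta eta0.
have [y Hy] := @Hden x (eta / 2) ltac:(lra).
pose J := (f y).+1.
have [_ XhJ EhJ HlJ] := (HI J).1.
have h1 := udist_ge Hb (g i) (hk J i) x.
have h2 := HlJ i.
have t1 := d_tri Hm (g i x) (hk J i x) (hs i x).
have t2 := d_tri Hm (hk J i x) (hk J i (iota y)) (hs i x).
have t3 := d_tri Hm (hk J i (iota y)) (hs i (iota y)) (hs i x).
have t4 : d (hk J i (iota y)) (hs i (iota y)) = 0.
  have E := evt i y J (leqnn _).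
  by rewrite /hk (EhJ i) Ehs -E (d_xx Hm).
have t5 := autM_iso (XhJ i) x (iota y).
have t6 := autM_iso (Xhs i) (iota y) x.
have t7 := d_sym Hm (iota y) x.
rewrite /hk in h1 h2 t1 t2 t3 t4 t5 t6 t7 *.
lra.
Qed.

Lemma part1 n (A : set ('I_n -> ncar N -> ncar N)) : A `<=` XN n ->
  comeagre (XN n) (@N_open N n) A -> comeagre (XM n) (@tau_open R M n) (dclosure (Ext A)).
Proof.
move=> sA [D [HD cov]].
pose W k := [set t : 'I_n -> ncar N -> ncar N | XN n t /\
   exists V, [/\ N_open V, V t & V `&` D k = set0]].
have oW k : N_open (W k).
  split; first by move=> t [].
  move=> t [Xt [V [oV Vt VD]]]; have [F HF] := oV.2 t Vt.
  exists F => t' Xt' Et'; split => //; exists V; split => //; exact: HF.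
have dW k U : N_open U -> U !=set0 -> (U `&` W k) !=set0.
  move=> oU neU; have [V [oV [v Vv] VU VD]] := HD k U oU neU.
  exists v; split; first exact: VU.
  by split; [exact: oV.1 | exists V].
have WA t : XN n t -> (forall k, W k t) -> A t.
  move=> Xt Wt; apply: contrapT => nA.
  have [k _ Dk] := cov t (conj Xt nA).
  have [_ [V [_ Vt VD]]] := Wt k.
  have : (V `&` D k) t by [].
  by rewrite VD.
pose eps (p : nat) : R := (p.+1%:R)^-1.
have eps0 p : 0 < eps p by rewrite /eps invr_gt0 ltr0n.
pose I := (nat + (nat * nat * seq (nat * nat * nat)))%type.
pose An j : set ('I_n -> mcar M -> mcar M) := match @unpickle I j with
  | Some (inl p) => XM n `\` nbd (XN n) (eps p)
  | Some (inr q) => nbd (B n q.2) (eps q.1.2) `\` nbd (B n q.2 `&` W q.1.1) (eps q.1.2)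
  | None => set0 end.
exists An; split.
  move=> j; rewrite /An; case: unpickle => [[p|[[k p] L]]|].
  - exact: nd_D.
  - by apply: nd_S => //; [apply: B_open | apply: dW].
  - exact: nd_0.
move=> g [Xg ng]; apply: contrapT => H.
have Hnot j : ~ An j g by move=> h; apply: H; exists j.
apply: ng; split => // e e0.
have [p Hp] := ltr_add_invr e0; rewrite add0r in Hp.
have P0 : nbd (XN n) (eps p) g.
  apply: contrapT => h; apply: (Hnot (pickle (inl p : I))); rewrite /An pickleK; by split.
have P1 L k : nbd (B n L) (eps p) g -> nbd (B n L `&` W k) (eps p) g.
  move=> h; apply: contrapT => h'; apply: (Hnot (pickle (inr (k, p, L) : I))); rewrite /An pickleK; by split.
have [s [hs [Xs Ws Xhs Ehs Hhs]]] := chain oW (eps0 p) P0 P1.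
exists hs; first by split => //; exists s => //; apply: WA.
by move=> i; apply: le_lt_trans (Hhs i) Hp.
Qed.

Lemma comeagre_mono T (X : set T) op (A A' : set T) :
  comeagre X op A -> A `<=` A' -> comeagre X op A'.
Proof.
move=> [D [HD cov]] AA'; exists D; split => // x [Xx nA']; apply: cov; split => //.
by move=> /AA'.
Qed.

Lemma part2 : ample_generics_N N -> ample_generics_topometric M.
Proof.
move=> HN n e e0; have [ss Xss Hc] := HN n.
have [gs [Xgs Egs]] := ext_exists Xss.
exists gs => //.
apply: comeagre_mono (part1 _ Hc) _; first by move=> t [].
move=> g [Xg Hg]; have [hs [Xhs [ts [Xts [k Xk Hk]] Ets]] Hl] := Hg e e0.
split => //; exists hs => //; split => //.
have [gk [Xgk Egk]] := Hext Xk.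
exists gk => // i.
apply: (@iso_dense_eq R M Hm (range iota)).
- move=> x e' e'0; have [y Hy] := @Hden x e' e'0; exists (iota y) => //; by exists y.
- by move=> x y /=; rewrite !(autM_iso (Xhs i)) (autM_iso Xgk).
- by move=> x y /=; rewrite (autM_iso Xgk) (autM_iso (Xgs i)).
- move=> _ [x _ <-] /=; rewrite Egk Ets Egs Egk.
  by have /= -> := f_equal (fun F => F x) (Hk i).
Qed.

End Main.

Theorem theorem5p6 (R : realType) (M : mstruct R) (N : cstruct)
    (iota : ncar N -> mcar M) :
  polish_metric_structure M ->
  good_approximating iota ->
  (forall (n : nat) (A : set ('I_n -> ncar N -> ncar N)),
     A `<=` @AutNn N n ->
     comeagre (@AutNn N n) (@N_open N n) A ->
     comeagre (@AutMn R M n) (@tau_open R M n) (dclosure (extn iota A)))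
  /\ (ample_generics_N N -> ample_generics_topometric M).
Proof.
move=> [[Hm _ Hb _ _] _] [[Hinj Hcount Hden Hext Hdense] Hgood].
have /countable_injP [f Hf'] := Hcount.
have Hf : injective f by move=> x y E; apply: Hf' => //; rewrite in_setT.
split.
- move=> n A sA cA; exact: (part1 Hm Hb Hden Hext Hdense Hgood Hf sA cA).
- exact: (part2 Hm Hb Hden Hext Hdense Hgood Hf).
Qed.
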